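(* If a join-congruence uniform lattice is shellable, then it is join-extremal. If a meet-congruence uniform lattice is shellable, then it is meet-extremal.
   Context: All lattices are finite. For a convex subset $C$ of a lattice $L$, let $I_L(C)=\{y\in L\mid\exists x\in C,\ y\le x\}$, and the doubling $L[C]$ is the subposet of $L\times\{0<1\}$ on $\big(I_L(C)\times\{0\}\big)\sqcup\big(((L\setminus I_L(C))\cup C)\times\{1\}\big)$. A lattice is join-congruence uniform (resp. meet-congruence uniform) if it is obtained from the one-element lattice by successive doublings of nonempty lower (resp. upper) pseudo-intervals, where a lower (resp. upper) pseudo-interval is a convex union of intervals sharing the same minimum (resp. maximum). Join-extremal (resp. meet-extremal) means the length (maximum number of elements of a chain minus one) equals the number of join-irreducible (resp. meet-irreducible) elements. The order complex of $L$ has the chains of $L$ as faces; $L$ is shellable if its facets (maximal chains) admit a linear order $F_1,\dots,F_k$ such that for each $j<k$, $\big(\bigcup_{i\le j}\langle F_i\rangle\big)\cap\langle F_{j+1}\rangle$ is pure of dimension $|F_{j+1}|-2$, with $\langle F\rangle$ the set of subsets of $F$. *)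

(* Defs.v *)
From HB Require Import structures.
From mathcomp Require Import all_boot all_order.
Set Implicit Arguments. Unset Strict Implicit. Unset Printing Implicit Defensive.
Import Order.Theory.
Local Open Scope order_scope.

Section RelDefs.
Variables (T : finType) (le : rel T).

Definition interval (a b : T) : {set T} := [set y | le a y && le y b].

Definition convex (C : {set T}) : bool :=
  [forall x in C, forall z in C, forall y, (le x y && le y z) ==> (y \in C)].

Definition lower_pseudo_interval (C : {set T}) : Prop :=
  exists (a : T) (B : {set T}),
    [/\ B != set0, (forall b, b \in B -> le a b),
        C = \bigcup_(b in B) interval a b & convex C].

Definition upper_pseudo_interval (C : {set T}) : Prop :=
  exists (b : T) (A : {set T}),
    [/\ A != set0, (forall a, a \in A -> le a b),
        C = \bigcup_(a in A) interval a b & convex C].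

Definition down_closure (C : {set T}) : {set T} :=
  [set y | [exists x in C, le y x]].

(* underlying set of the doubling L[C], as a subset of L x {0<1}
   (false = 0, true = 1) *)
Definition doubling (C : {set T}) : {set T * bool} :=
  [set p | if p.2 then (p.1 \notin down_closure C) || (p.1 \in C)
           else p.1 \in down_closure C].

Definition dbl_le (p q : T * bool) : bool := le p.1 q.1 && (p.2 <= q.2)%N.

End RelDefs.

(* Lattices obtained from the one-element lattice by successive doublings of
   nonempty lower pseudo-intervals (lower = true) or upper pseudo-intervals
   (lower = false); everything up to order isomorphism. *)
Inductive doubling_generated (lower : bool) : forall T : finType, rel T -> Prop :=
| dg_one (T : finType) (le : rel T) :
    #|T| = 1 -> reflexive le -> doubling_generated lower le
| dg_double (T : finType) (le : rel T) (C : {set T})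
    (T' : finType) (le' : rel T') (f : T' -> T * bool) :
    doubling_generated lower le ->
    C != set0 ->
    (if lower then lower_pseudo_interval le C else upper_pseudo_interval le C) ->
    injective f ->
    (forall x, f x \in doubling le C) ->
    (forall p, p \in doubling le C -> exists x, f x = p) ->
    (forall x y, le' x y = dbl_le le (f x) (f y)) ->
    doubling_generated lower le'.

Section LatticeDefs.
Variables (d : Order.disp_t) (L : finTBLatticeType d).

Definition join_congruence_uniform : Prop :=
  doubling_generated true (fun x y : L => x <= y).
Definition meet_congruence_uniform : Prop :=
  doubling_generated false (fun x y : L => x <= y).

Definition join_irreducible (x : L) : bool :=
  (x != \bot) && [forall y : L, forall z : L, (x == y `|` z) ==> (x == y) || (x == z)].
Definition meet_irreducible (x : L) : bool :=
  (x != \top) && [forall y : L, forall z : L, (x == y `&` z) ==> (x == y) || (x == z)].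

(* chains of L = faces of the order complex *)
Definition chain (S : {set L}) : bool :=
  [forall x in S, forall y in S, (x <= y) || (y <= x)].

Definition lattice_length : nat := ((\max_(S : {set L} | chain S) #|S|) - 1)%N.

Definition join_extremal : Prop := lattice_length = #|[set x : L | join_irreducible x]|.
Definition meet_extremal : Prop := lattice_length = #|[set x : L | meet_irreducible x]|.

(* facets of the order complex = maximal chains *)
Definition maximal_chain (F : {set L}) : bool :=
  chain F && [forall G : {set L}, (chain G && (F \subset G)) ==> (G == F)].

(* a simplicial complex K (set of faces) is pure of dimension n - 1, i.e.
   all its facets (inclusion-maximal faces) have n elements *)
Definition pure_of_size (K : {set {set L}}) (n : nat) : Prop :=
  forall G, G \in K -> (forall H, H \in K -> G \subset H -> H = G) -> #|G| = n.

(* (U_{i<=j} <F_i>) cap <F_{j+1}>, with the facets listed 0-indexed in s *)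
Definition shelling_complex (s : seq {set L}) (j : nat) : {set {set L}} :=
  [set G : {set L} | (G \subset nth set0 s j) && has (fun F : {set L} => G \subset F) (take j s)].

Definition shellable : Prop :=
  exists s : seq {set L},
    [/\ uniq s, (forall F, (F \in s) = maximal_chain F) &
        forall j, (0 < j < size s)%N ->
          pure_of_size (shelling_complex s j) (#|nth set0 s j| - 1)].

End LatticeDefs.

(* Main.v *)
Require Import Defs.
From HB Require Import structures.
From mathcomp Require Import all_boot all_order.
From mathcomp Require Import zify.
Set Implicit Arguments. Unset Strict Implicit. Unset Printing Implicit Defensive.

Section Gen.
Variables (T : finType) (le : rel T).
Hypotheses (lrefl : reflexive le) (lanti : antisymmetric le) (ltrans : transitive le).

Definition chainr (S : {set T}) : bool :=
  [forall x in S, forall y in S, le x y || le y x].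
Definition maxchainr (F : {set T}) : bool :=
  chainr F && [forall G : {set T}, (chainr G && (F \subset G)) ==> (G == F)].
Definition msize : nat := \max_(S : {set T} | chainr S) #|S|.
Definition Qr : Prop :=
  exists s : seq {set T},
    (forall F, (F \in s) = maxchainr F) /\
    forall j, (0 < j < size s)%N -> exists2 i, (i < j)%N &
      (#|nth set0 s j| <= #|nth set0 s i :&: nth set0 s j| + 1)%N.
Definition ltr x y := (x != y) && le x y.
Definition lcov x : {set T} := [set y | ltr y x && [forall z, ~~ (ltr y z && ltr z x)]].
Definition cnt : nat := #|[set x | #|lcov x| == 1%N]|.

Lemma chainrP (S : {set T}) : reflect (forall x y, x \in S -> y \in S -> le x y || le y x) (chainr S).
Proof.
apply: (iffP forallP) => [H x y xS yS|H x].
  by move: (H x); rewrite xS /= => /forallP/(_ y); rewrite yS.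
by apply/implyP => xS; apply/forallP => y; apply/implyP => yS; apply: H.
Qed.

Lemma maxchainrP F : maxchainr F -> chainr F /\ forall G, chainr G -> F \subset G -> G = F.
Proof.
case/andP => cF /forallP H; split => // G cG sFG.
by move: (H G); rewrite cG sFG /= => /eqP.
Qed.

Lemma chain_sub (S S' : {set T}) : S' \subset S -> chainr S -> chainr S'.
Proof.
move=> sub /chainrP H; apply/chainrP => x y xS yS; apply: H; exact: (subsetP sub).
Qed.

Lemma chain_ext (S : {set T}) : chainr S -> exists2 F, maxchainr F & S \subset F.
Proof.
move=> cS.
have [F /andP [cF sSF] Fmax] := @arg_maxnP _ S (fun G => chainr G && (S \subset G)) (fun G => #|G|) (introT andP (conj cS (subxx _))).
exists F => //; apply/andP; split => //; apply/forallP => G; apply/implyP => /andP [cG sFG].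
have := Fmax G; rewrite cG (subset_trans sSF sFG) => /(_ isT) leGF.
by rewrite eq_sym eqEcard sFG /=.
Qed.

Lemma msize_ge (S : {set T}) : chainr S -> (#|S| <= msize)%N.
Proof. by move=> cS; apply: (@leq_bigmax_cond _ chainr (fun S => #|S|)). Qed.

Lemma msize_att : exists2 S, chainr S & #|S| = msize.
Proof.
have : (0 < #|[pred S : {set T} | chainr S]|)%N.
  apply/card_gt0P; exists set0; rewrite inE; apply/chainrP => x y; by rewrite inE.
move/(@eq_bigmax_cond _ _ (fun S : {set T} => #|S|)) => [S0 HS0 E].
by exists S0 => //; rewrite /msize -E; apply: eq_bigl => S; rewrite inE.
Qed.

Lemma chain_least (A : {set T}) : A != set0 -> chainr A -> exists2 m, m \in A & forall z, z \in A -> le m z.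
Proof.
case/set0Pn => a aA /chainrP cA.
have [m mA mmin] := @arg_minnP _ a (fun m => m \in A) (fun m => #|[set w in A | le w m]|) aA.
exists m => // z zA.
case/orP: (cA _ _ mA zA) => // lezm.
have sub : [set w in A | le w z] \subset [set w in A | le w m].
  apply/subsetP => w; rewrite !inE => /andP [-> lwz] /=; exact: ltrans lwz lezm.
have := mmin z zA => lecard.
have eqs : [set w in A | le w z] = [set w in A | le w m].
  by apply/eqP; rewrite eqEcard sub; exact: lecard.
have : m \in [set w in A | le w z] by rewrite eqs inE mA lrefl.
by rewrite inE => /andP [].
Qed.

Lemma cover_exists z x : ltr z x -> exists2 y, le z y & y \in lcov x.
Proof.
move=> lzx.
have [y /andP [lzy lyx] ymax] := @arg_maxnP _ z (fun y => le z y && ltr y x)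
   (fun y => #|[set w | le w y]|) (introT andP (conj (lrefl z) lzx)).
exists y => //; rewrite inE lyx /=; apply/forallP => w; apply/negP => /andP [lyw lwx].
have := ymax w; rewrite (ltrans lzy (proj2 (andP lyw))) lwx => /(_ isT) lecard.
have sub : [set u | le u y] \subset [set u | le u w].
  apply/subsetP => u; rewrite !inE => luy; exact: ltrans luy (proj2 (andP lyw)).
have eqs : [set u | le u y] = [set u | le u w] by apply/eqP; rewrite eqEcard sub; exact: lecard.
have : w \in [set u | le u y] by rewrite eqs inE lrefl.
rewrite inE => lwy; case/andP: lyw => nyw lyw2.
by move/negP: nyw; apply; apply/eqP; apply: lanti; rewrite lyw2 lwy.
Qed.

Lemma chain_add (M : {set T}) x : chainr M -> (forall z, z \in M -> le x z || le z x) -> chainr (x |: M).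
Proof.
move=> /chainrP cM H; apply/chainrP => u v; rewrite !inE => /orP [/eqP ->|uM] /orP [/eqP ->|vM].
- by rewrite lrefl.
- exact: H.
- by rewrite orbC; apply: H.
- exact: cM.
Qed.

Lemma max_add (M : {set T}) x : maxchainr M -> (forall z, z \in M -> le x z || le z x) -> x \in M.
Proof.
move=> /maxchainrP [cM mM] H.
have := mM _ (chain_add cM H) (subsetUr _ _) => <-.
by rewrite !inE eqxx.
Qed.

Lemma max_sub (F G : {set T}) : maxchainr F -> chainr G -> F \subset G -> G = F.
Proof. by move=> /maxchainrP [_ mF]; apply: mF. Qed.

End Gen.

Lemma card_two (T : finType) (A B : {set T}) x0 x1 : x0 \in A -> x1 \in A -> x0 != x1 ->
  x0 \notin B -> x1 \notin B -> (#|A :&: B| + 2 <= #|A|)%N.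
Proof.
move=> x0A x1A nx x0B x1B; rewrite -(cardsID B A) leq_add2l.
have <- : #|[set x0; x1]| = 2 by rewrite cards2 nx.
by apply: subset_leq_card; apply/subsetP => z; rewrite !inE => /orP [] /eqP ->; rewrite ?x0A ?x1A ?x0B ?x1B.
Qed.

Lemma chainr_op (T : finType) (le : rel T) (S : {set T}) :
  chainr (fun x y => le y x) S = chainr le S.
Proof.
apply/chainrP/chainrP => H x y xS yS; by rewrite orbC; apply: H.
Qed.

Lemma maxchainr_op (T : finType) (le : rel T) (S : {set T}) :
  maxchainr (fun x y => le y x) S = maxchainr le S.
Proof.
rewrite /maxchainr chainr_op; congr (_ && _); apply: eq_forallb => G.
by rewrite chainr_op.
Qed.

Lemma chain_greatest (T : finType) (le : rel T) : reflexive le -> antisymmetric le -> transitive le ->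
  forall A : {set T}, A != set0 -> chainr le A -> exists2 m, m \in A & forall z, z \in A -> le z m.
Proof.
move=> lr la lt A An cA.
have la' : antisymmetric (fun x y => le y x).
  by move=> x y /andP [h1 h2]; apply: la; rewrite h1 h2.
have lt' : transitive (fun x y => le y x).
  by move=> y x z h1 h2; apply: lt h2 h1.
apply: (@chain_least _ (fun x y => le y x) lr lt' A An).
by rewrite chainr_op.
Qed.


Lemma ar1 a b : (b <= a + 1 -> a + 2 <= b -> False)%N.
Proof. lia. Qed.
Lemma ar2 a b d l : (d <= a + 1 -> l <= d -> b <= l -> a + 2 <= b -> False)%N.
Proof. lia. Qed.
Lemma ar3 a b d l : (d <= a + 1 -> l <= d -> b < l -> b <= a)%N.
Proof. lia. Qed.

Section Dbl.
Variables (T : finType) (le : rel T) (C : {set T}) (T' : finType) (le' : rel T')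
  (f : T' -> T * bool).
Hypotheses (lrefl : reflexive le) (lanti : antisymmetric le) (ltrans : transitive le).
Hypotheses (Cne : C != set0) (Cconv : convex le C) (finj : injective f)
  (fD : forall x, f x \in doubling le C)
  (fonto : forall q, q \in doubling le C -> exists x, f x = q)
  (fle : forall x y, le' x y = dbl_le le (f x) (f y)).

Local Notation I := (down_closure le C).
Definition pp x := (f x).1.
Definition lv x := (f x).2.

Lemma memD x : if lv x then (pp x \notin I) || (pp x \in C) else pp x \in I.
Proof. by have := fD x; rewrite inE. Qed.

Lemma leE x y : le' x y = le (pp x) (pp y) && (lv x <= lv y)%N.
Proof. by rewrite fle. Qed.

Lemma fE x y : pp x = pp y -> lv x = lv y -> x = y.
Proof.
by move=> E1 E2; apply: finj; rewrite [f x]surjective_pairing [f y]surjective_pairing -/(pp x) -/(pp y) -/(lv x) -/(lv y) E1 E2.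
Qed.

Lemma ID y x : le y x -> x \in I -> y \in I.
Proof.
move=> lyx; rewrite !inE => /existsP [c /andP [cC lxc]].
by apply/existsP; exists c; rewrite cC (ltrans lyx lxc).
Qed.

Lemma CI c : c \in C -> c \in I.
Proof. by move=> cC; rewrite inE; apply/existsP; exists c; rewrite cC lrefl. Qed.

Lemma IC y : y \in I -> exists2 c, c \in C & le y c.
Proof. by rewrite inE => /existsP [c /andP [cC lyc]]; exists c. Qed.

Lemma convP x y z : x \in C -> z \in C -> le x y -> le y z -> y \in C.
Proof.
move=> xC zC lxy lyz; move/forallP: Cconv => /(_ x); rewrite xC /= => /forallP /(_ z).
by rewrite zC /= => /forallP /(_ y); rewrite lxy lyz.
Qed.

Lemma convI x y : x \in C -> le x y -> y \in I -> y \in C.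
Proof. by move=> xC lxy /IC [c cC lyc]; apply: convP xC cC lxy lyc. Qed.

Lemma lv0I x : lv x = false -> pp x \in I.
Proof. by move=> E; have := memD x; rewrite E. Qed.

Lemma lv1C x : lv x = true -> pp x \in I -> pp x \in C.
Proof. by move=> E xI; have := memD x; rewrite E xI. Qed.

Lemma copy t (k : bool) : (if k then (t \notin I) || (t \in C) else t \in I) ->
  exists x, pp x = t /\ lv x = k.
Proof.
move=> H; have [x fx] : exists x, f x = (t, k) by apply: fonto; rewrite inE.
by exists x; rewrite /pp /lv fx.
Qed.

Lemma ex_sig t : exists x, f x == (t, t \notin I).
Proof.
have [x [E1 E2]] : exists x, pp x = t /\ lv x = (t \notin I).
  by apply: copy; case: (t \in I).
by exists x; rewrite [f x]surjective_pairing -/(pp x) -/(lv x) E1 E2.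
Qed.

Definition sigl t := xchoose (ex_sig t).
Lemma sigE t : f (sigl t) = (t, t \notin I).
Proof. exact/eqP/(xchooseP (ex_sig t)). Qed.
Lemma p_sig t : pp (sigl t) = t. Proof. by rewrite /pp sigE. Qed.
Lemma lv_sig t : lv (sigl t) = (t \notin I). Proof. by rewrite /lv sigE. Qed.

Lemma sig_le t u : le t u -> le' (sigl t) (sigl u).
Proof.
move=> ltu; rewrite leE !p_sig !lv_sig ltu /=.
by case: (boolP (t \in I)) => //= tI; case: (boolP (u \in I)) => // uI; rewrite (ID ltu uI) in tI.
Qed.

Lemma sig_inj : injective sigl.
Proof. by move=> t u E; rewrite -(p_sig t) E p_sig. Qed.

Lemma lrefl' : reflexive le'.
Proof. by move=> x; rewrite leE lrefl leqnn. Qed.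
Lemma lanti' : antisymmetric le'.
Proof.
move=> x y; rewrite !leE => /andP [/andP [l1 b1] /andP [l2 b2]].
apply: fE; first by apply: lanti; rewrite l1 l2.
by move: b1 b2; case: (lv x); case: (lv y).
Qed.
Lemma ltrans' : transitive le'.
Proof.
move=> y x z; rewrite !leE => /andP [l1 b1] /andP [l2 b2].
by rewrite (ltrans l1 l2) (leq_trans b1 b2).
Qed.

Lemma chain_p (M : {set T'}) : chainr le' M -> chainr le (pp @: M).
Proof.
move/chainrP => H; apply/chainrP => u v /imsetP [x xM ->] /imsetP [y yM ->].
by case/orP: (H x y xM yM); rewrite !leE => /andP [-> _]; rewrite ?orbT.
Qed.

Definition vertb (M : {set T'}) : bool :=
  [exists x0 in M, exists x1 in M, (pp x0 == pp x1) && ~~ lv x0 && lv x1].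

Lemma vertP (M : {set T'}) : reflect (exists x0 x1, [/\ x0 \in M, x1 \in M, pp x0 = pp x1, lv x0 = false & lv x1 = true]) (vertb M).
Proof.
apply: (iffP existsP) => [[x0 /andP [x0M /existsP [x1 /andP [x1M /andP [/andP [/eqP E nl0] l1]]]]]|[x0 [x1 [x0M x1M E l0 l1]]]].
  by exists x0, x1; split => //; apply/negbTE.
by exists x0; rewrite x0M /=; apply/existsP; exists x1; rewrite x1M E eqxx l0 l1.
Qed.

Lemma nonvert_inj (M : {set T'}) : ~~ vertb M -> {in M &, injective pp}.
Proof.
move=> nv x y xM yM E; apply: fE => //.
case Ex: (lv x); case Ey: (lv y) => //.
  by case/negP: nv; apply/vertP; exists y, x; split.
by case/negP: nv; apply/vertP; exists x, y; split.
Qed.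

Lemma nonvert_card (M : {set T'}) : ~~ vertb M -> #|pp @: M| = #|M|.
Proof. by move=> nv; rewrite card_in_imset //; apply: nonvert_inj. Qed.

Lemma vert_card (M : {set T'}) : chainr le' M -> (#|M| <= #|pp @: M| + 1)%N.
Proof.
move=> cM; case: (boolP (vertb M)) => [/vertP [x0 [x1 [x0M x1M E l0 l1]]]|nv]; last by rewrite nonvert_card // leq_addr.
have nv : ~~ vertb (M :\ x0).
  apply/vertP => [[a0 [a1 [a0M a1M Ea la0 la1]]]].
  move: a0M a1M; rewrite !inE => /andP [na0 a0M] /andP [_ a1M].
  move/chainrP: cM => cM.
  have h1 : le (pp a0) (pp x1).
    case/orP: (cM _ _ a0M x1M); rewrite !leE; first by case/andP.
    by rewrite la0 l1 /= andbF.
  have h2 : le (pp x0) (pp a1).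
    case/orP: (cM _ _ x0M a1M); rewrite !leE; first by case/andP.
    by rewrite la1 l0 /= andbF.
  have : pp a0 = pp x0 by apply: lanti; rewrite E h1 /= -E Ea h2.
  by move=> Ep; case/negP: na0; apply/eqP; apply: fE; rewrite ?la0 ?l0.
rewrite (cardsD1 x0 M) x0M add1n addn1 ltnS -(nonvert_card nv).
by apply: subset_leq_card; apply: imsetS; apply: subsetDl.
Qed.


Lemma pair_C x0 x1 : pp x0 = pp x1 -> lv x0 = false -> lv x1 = true -> pp x1 \in C.
Proof. by move=> E l0 l1; apply: lv1C => //; rewrite -E; apply: lv0I. Qed.

Lemma vert_of (M : {set T'}) x : maxchainr le' M -> x \in M -> pp x \in C -> vertb M.
Proof.
move=> mM xM xC; have cM := proj1 (maxchainrP mM); have cM' := cM; move/chainrP: cM' => cMP.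
case Ex: (lv x).
- set A := [set y in M | lv y].
  have An : A != set0 by apply/set0Pn; exists x; rewrite inE xM Ex.
  have cA : chainr le' A by apply: chain_sub cM; apply/subsetP => y; rewrite inE => /andP [].
  have [m] := chain_least lrefl' ltrans' An cA; rewrite inE => /andP [m_M lm] mmin.
  have lmx : le (pp m) (pp x) by have := mmin x; rewrite inE xM Ex leE => /(_ isT) /andP [].
  have mI : pp m \in I by apply: ID lmx (CI xC).
  have [x1 [E1 E2]] := @copy (pp m) false mI.
  have x1M : x1 \in M.
    apply: (max_add lrefl' mM) => z zM; rewrite !leE E1 E2.
    case Ez: (lv z).
      by have := mmin z; rewrite inE zM Ez leE => /(_ isT) /andP [-> _].
    case/orP: (cMP _ _ m_M zM); rewrite !leE lm Ez /= ?andbF // => /andP [-> _].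
    by rewrite orbT.
  by apply/vertP; exists x1, m; split => //.
- set A := [set y in M | ~~ lv y].
  have An : A != set0 by apply/set0Pn; exists x; rewrite inE xM Ex.
  have cA : chainr le' A by apply: chain_sub cM; apply/subsetP => y; rewrite inE => /andP [].
  have [m] := chain_greatest lrefl' lanti' ltrans' An cA; rewrite inE => /andP [m_M /negbTE lm] mmax.
  have lxm : le (pp x) (pp m) by have := mmax x; rewrite inE xM Ex leE => /(_ isT) /andP [].
  have mC : pp m \in C by apply: convI xC lxm (lv0I lm).
  have [x1 [E1 E2]] := @copy (pp m) true (introT orP (or_intror mC)).
  have x1M : x1 \in M.
    apply: (max_add lrefl' mM) => z zM; rewrite !leE E1 E2.
    case Ez: (lv z).
      case/orP: (cMP _ _ m_M zM); rewrite !leE lm Ez /= ?andbF // => /andP [-> _].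
      by [].
    by have := mmax z; rewrite inE zM Ez leE => /(_ isT) /andP [-> _]; rewrite orbT.
  by apply/vertP; exists m, x1; split => //.
Qed.

Lemma max_p (M : {set T'}) : maxchainr le' M -> maxchainr le (pp @: M).
Proof.
move=> mM; have cM := proj1 (maxchainrP mM); have cM' := cM; move/chainrP: cM' => cMP.
apply/andP; split; first exact: chain_p.
apply/forallP => G; apply/implyP => /andP [cG sub]; rewrite eqEsubset sub andbT.
apply/subsetP => t tG; apply/negPn/negP => tM.
have comp z : z \in M -> le (pp z) t || le t (pp z).
  by move=> zM; move/chainrP: cG; apply => //; apply: (subsetP sub); apply: imset_f.
have ne z : z \in M -> pp z != t by move=> zM; apply: contra tM => /eqP <-; apply: imset_f.
pose k := if t \in I then (if t \in C then [exists z in M, lv z && le (pp z) t] else false) else true.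
have memk : if k then (t \notin I) || (t \in C) else t \in I.
  rewrite /k; case: (boolP (t \in I)) => tI //=; case: (boolP (t \in C)) => tC //=.
  by case: ifP.
have [x' [E1 E2]] := copy memk.
have : x' \in M.
  apply: (max_add lrefl' mM) => z zM; rewrite !leE E1 E2.
  case/orP: (comp z zM) => h; rewrite h /=.
  - suff hk : lv z ==> k.
      have -> : (lv z <= k)%N by move: hk; case: (lv z); case: (k).
      by rewrite orbT.
    apply/implyP => Ez; rewrite /k; case: (boolP (t \in I)) => tI //.
    have zC : pp z \in C by apply: lv1C Ez (ID h tI).
    case: (boolP (t \in C)) => tC.
      by apply/existsP; exists z; rewrite zM Ez h.
    by rewrite (convI zC h tI) in tC.
  - suff hk : k ==> lv z.
      have -> : (k <= lv z)%N by move: hk; case: (lv z); case: (k).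
      by rewrite ?orbT.
    apply/implyP => kk; case Ez: (lv z) => //.
    have zI := lv0I Ez; have tI := ID h zI.
    move: kk; rewrite /k tI; case: (t \in C) => //; move=> /existsP [z' /andP [z'M /andP [l1 h']]].
    case/orP: (cMP _ _ z'M zM); rewrite !leE Ez l1 /= ?andbF // => /andP [h2 _].
    case/negP: (ne z zM); apply/eqP/lanti; rewrite h /=.
    by rewrite andbT; exact: ltrans h2 h'.
by move=> x'M; case/negP: tM; rewrite -E1; apply: imset_f.
Qed.

Lemma lift_max (D : {set T}) : maxchainr le D -> exists2 M, maxchainr le' M & pp @: M = D.
Proof.
move=> mD; have cD := proj1 (maxchainrP mD).
have cS : chainr le' (sigl @: D).
  apply/chainrP => x y /imsetP [t tD ->] /imsetP [u uD ->].
  have cDP := cD; move/chainrP: cDP => cDP.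
  by case/orP: (cDP t u tD uD) => h; rewrite (sig_le h) ?orbT.
have [M mM sub] := chain_ext cS.
exists M => //; apply: (max_sub mD (chain_p (proj1 (maxchainrP mM)))).
apply/subsetP => t tD; apply/imsetP; exists (sigl t); last by rewrite p_sig.
by apply: (subsetP sub); apply: imset_f.
Qed.

Lemma Q_desc : Qr le' -> Qr le.
Proof.
case=> s [sm sQ]; exists (map (fun M : {set T'} => pp @: M) s); split.
  move=> F; apply/mapP/idP => [[M Ms ->]|mF]; first by apply: max_p; rewrite -sm.
  by have [M mM E] := lift_max mF; exists M; rewrite ?sm.
move=> j; rewrite size_map => /andP [j0 js].
have [i ij H] := sQ j (introT andP (conj j0 js)).
exists i => //; have is_ : (i < size s)%N by apply: ltn_trans ij js.
rewrite !(nth_map set0) //.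
set Si := nth set0 s i; set Sj := nth set0 s j.
have eSj : Sj = (Si :&: Sj) :|: (Sj :\: Si).
  by apply/setP => z; rewrite !inE; case: (z \in Si); case: (z \in Sj).
have h1 : (#|Sj :\: Si| <= 1)%N.
  move: H; rewrite cardsD [Sj :&: Si]setIC; move: (#|Si :&: Sj|) (#|Sj|) => a b; lia.
rewrite {1}eSj imsetU.
apply: leq_trans (leq_card_setU _ _) _.
apply: leq_add.
  by apply: subset_leq_card; rewrite subsetI !imsetS ?subsetIl ?subsetIr.
exact: leq_trans (leq_imset_card _ _) h1.
Qed.

Lemma chain_sig (D : {set T}) : chainr le D -> chainr le' (sigl @: D).
Proof.
move=> cD; have cDP := cD; move/chainrP: cDP => cDP.
apply/chainrP => x y /imsetP [t tD ->] /imsetP [u uD ->].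
by case/orP: (cDP t u tD uD) => h; rewrite (sig_le h) ?orbT.
Qed.

Lemma msize_dbl : Qr le' -> msize le' = (msize le).+1.
Proof.
move=> [s [sm sQ]].
have up : (msize le' <= (msize le).+1)%N.
  apply/bigmax_leqP => M cM; apply: leq_trans (vert_card cM) _.
  by rewrite addn1 ltnS; apply: msize_ge; apply: chain_p.
apply/eqP; rewrite eqn_leq up /= ltnNge; apply/negP => H.
set l := msize le in up H.
have [D0 cD0 sD0] := msize_att le.
have sm' j : (j < size s)%N -> maxchainr le' (nth set0 s j) by move=> js; rewrite -sm mem_nth.
have ms j : (j < size s)%N -> (#|nth set0 s j| <= l)%N.
  move=> js; apply: leq_trans H; apply: msize_ge; exact: (proj1 (maxchainrP (sm' j js))).
case: (boolP (D0 :&: C == set0)) => [/eqP DC|DCn]; last first.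
  have [c] := chain_greatest lrefl lanti ltrans DCn (chain_sub (subsetIl _ _) cD0).
  rewrite inE => /andP [cD cC] cmax.
  have [x1 [E1 E2]] := @copy c true (introT orP (or_intror cC)).
  have cS : chainr le' (x1 |: sigl @: D0).
    apply: (chain_add lrefl' (chain_sig cD0)) => z /imsetP [t tD ->].
    rewrite !leE E1 E2 p_sig lv_sig.
    have cDP := cD0; move/chainrP: cDP => cDP.
    case/orP: (cDP t c tD cD) => h; first by rewrite h; case: (t \in I); rewrite ?orbT.
    case: (boolP (t \in I)) => tI /=; last by rewrite h.
    by rewrite (cmax t) ?orbT // inE tD (convI cC h tI).
  have nx : x1 \notin sigl @: D0.
    apply/imsetP => [[t tD E]]; move: E2; rewrite E lv_sig; move: E1; rewrite E p_sig => ->.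
    by rewrite (CI cC).
  have := msize_ge cS; rewrite cardsU1 nx card_imset; last exact: sig_inj.
  by rewrite sD0 -/l add1n => h2; have := leq_trans h2 H; rewrite ltnn.
have [N mN subN] := chain_ext (chain_sig cD0).
have EN : N = sigl @: D0.
  apply/eqP; rewrite eq_sym eqEcard subN /= card_imset; last exact: sig_inj.
  rewrite sD0; apply: leq_trans H; apply: msize_ge; exact: (proj1 (maxchainrP mN)).
have nvN : ~~ vertb N.
  apply/negP => /vertP [x0 [x1 [x0N x1N E l0 l1]]].
  have := pair_C E l0 l1; move: x1N; rewrite EN => /imsetP [t tD ->]; rewrite p_sig => tC.
  have : t \in D0 :&: C by rewrite inE tD tC.
  by rewrite DC inE.
have [c cC] := set0Pn _ Cne.
have [x0 [E0 F0]] := @copy c false (CI cC).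
have [x1 [E1 F1]] := @copy c true (introT orP (or_intror cC)).
have cV : chainr le' (x0 |: [set x1]).
  have c1 : chainr le' [set x1] by apply/chainrP => u v; rewrite !inE => /eqP -> /eqP ->; rewrite lrefl'.
  apply: (chain_add lrefl' c1).
  by move=> z; rewrite inE => /eqP ->; rewrite leE E0 E1 F0 F1 lrefl.
have [V0 mV0 subV] := chain_ext cV.
have vV0 : vertb V0.
  apply/vertP; exists x0, x1; split => //; last by rewrite E0 E1.
    by apply: (subsetP subV); rewrite !inE eqxx.
  by apply: (subsetP subV); rewrite !inE eqxx orbT.
have exv : exists j, (j < size s) && vertb (nth set0 s j).
  by exists (index V0 s); rewrite index_mem sm mV0 nth_index ?sm.
case: (ex_minnP exv) => jv /andP [jvs vjv] jvmin.
have jv0 : jv = 0.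
  case: jv jvs vjv jvmin => // j' jvs vjv jvmin; exfalso.
  have [i ij Hi] := sQ j'.+1 jvs.
  have is_ : (i < size s)%N by apply: ltn_trans ij jvs.
  move/vertP: vjv => [y0 [y1 [y0M y1M E l0 l1]]].
  have yC := pair_C E l0 l1.
  have ny : y0 != y1 by apply/negP => /eqP e; move: l0; rewrite e l1.
  have : (y0 \in nth set0 s i) || (y1 \in nth set0 s i).
    apply/negPn/negP; rewrite negb_or => /andP [n0 n1].
    have := card_two y0M y1M ny n0 n1; rewrite setIC; exact: ar1 Hi.
  case/orP => h.
    have := jvmin i; rewrite is_ (vert_of (sm' i is_) h) ?E //= => /(_ isT); rewrite leqNgt ij.
    by [].
  have := jvmin i; rewrite is_ (vert_of (sm' i is_) h) //= => /(_ isT); rewrite leqNgt ij.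
  by [].
move: vjv; rewrite jv0 => v0.
have exn : exists j, [&& (j < size s), ~~ vertb (nth set0 s j) & (l <= #|nth set0 s j|)%N].
  exists (index N s); rewrite index_mem sm mN nth_index ?sm // nvN /= EN card_imset; last exact: sig_inj.
  by rewrite sD0.
case: (ex_minnP exn) => jn /and3P [jns nvj lj] jnmin.
case: jn jns nvj lj jnmin => [|j'] jns nvj lj jnmin; first by rewrite v0 in nvj.
have [i ij Hi] := sQ j'.+1 jns.
have is_ : (i < size s)%N by apply: ltn_trans ij jns.
set Si := nth set0 s i in Hi *; set Sj := nth set0 s j'.+1 in Hi nvj lj *.
case: (boolP (vertb Si)) => [/vertP [y0 [y1 [y0M y1M E l0 l1]]] | nvi].
  have yC := pair_C E l0 l1.
  have ny : y0 != y1 by apply/negP => /eqP e; move: l0; rewrite e l1.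
  have n1 : y1 \notin Sj by apply/negP => h; rewrite (vert_of (sm' _ jns) h yC) in nvj.
  have n0 : y0 \notin Sj by apply/negP => h; rewrite (vert_of (sm' _ jns) h) ?E // in nvj.
  have := card_two y0M y1M ny n0 n1; have := ms i is_; exact: ar2 Hi lj.
suff li : (l <= #|Si|)%N.
  by have := jnmin i; rewrite is_ nvi li /= => /(_ isT); rewrite leqNgt ij.
rewrite leqNgt; apply/negP => hl.
have sub : Si \subset Sj.
  have : Si :&: Sj = Si.
    apply/eqP; rewrite eqEcard subsetIl /=; exact: ar3 Hi lj hl.
  by move/setIidPl.
have := max_sub (sm' i is_) (proj1 (maxchainrP (sm' _ jns))) sub => e.
have e' : #|Sj| = #|Si| by rewrite /Sj e.
by move: lj hl; rewrite e' => a b; have := leq_ltn_trans a b; rewrite ltnn.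
Qed.

Lemma between x y w : le' y x -> le (pp y) w -> le w (pp x) ->
  exists w', [/\ pp w' = w, le' y w' & le' w' x].
Proof.
move=> lyx h1 h2; move: (lyx); rewrite leE => /andP [_ lv_].
case Ey: (lv y); case Ex: (lv x); rewrite Ey Ex // in lv_.
- have [w' [E1 E2]] : exists w', pp w' = w /\ lv w' = true.
    apply: copy; have := memD y; rewrite Ey => /orP [nI|yC].
      by apply/orP; left; apply: contra nI; apply: ID.
    by case: (boolP (w \in I)) => // wI; rewrite (convI yC h1 wI) orbT.
  by exists w'; rewrite !leE E1 E2 Ey Ex h1 h2.
- exists (sigl w); rewrite !leE p_sig lv_sig Ey Ex h1 h2 /=; split => //.
  by case: (w \in I).
- have [w' [E1 E2]] := @copy w false (ID h2 (lv0I Ex)).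
  by exists w'; rewrite !leE E1 E2 Ey Ex h1 h2.
Qed.

Lemma cov_same x y1 y2 : y1 \in lcov le' x -> ltr le' y2 x -> pp y1 = pp y2 ->
  lv y1 = false -> lv y2 = true -> False.
Proof.
rewrite inE => /andP [_ /forallP /(_ y2)] nb l2 E l0 l1; case/negP: nb; rewrite l2 andbT.
apply/andP; split; first by apply/negP => /eqP e; move: l0; rewrite e l1.
by rewrite leE E lrefl l0.
Qed.

Lemma lcov_sig t : #|lcov le' (sigl t)| = #|lcov le t|.
Proof.
set x := sigl t.
have px : pp x = t := p_sig t.
have lx : lv x = (t \notin I) := lv_sig t.
have inj : {in lcov le' x &, injective pp}.
  move=> y1 y2 h1 h2 E; apply: fE => //.
  have l2 : ltr le' y2 x by move: h2; rewrite inE => /andP [].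
  have l1' : ltr le' y1 x by move: h1; rewrite inE => /andP [].
  case E1: (lv y1); case E2: (lv y2) => //.
    by exfalso; apply: (cov_same h2 l1' (esym E)).
  by exfalso; apply: (cov_same h1 l2 E).
rewrite -(card_in_imset inj); apply: eq_card => u; apply/imsetP/idP.
- move=> [y]; rewrite inE => /andP [/andP [nyx lyx] nb] ->.
  have [lpy lvy] : le (pp y) t /\ (lv y <= lv x)%N by move: lyx; rewrite leE px => /andP [].
  rewrite inE; apply/andP; split.
    rewrite /ltr lpy andbT; apply/negP => /eqP e.
    have : lv y != lv x by apply: contra nyx => /eqP e2; apply/eqP; apply: fE; rewrite // px.
    move: lvy; rewrite lx; case Ey: (lv y); case: (boolP (t \in I)) => tI //= _ _.
    by move: (lv0I Ey); rewrite e (negbTE tI).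
  apply/forallP => w; apply/negP => /andP [/andP [n1 l1] /andP [n2 l2]].
  have l2x : le w (pp x) by rewrite px.
  have [w' [E1 l1' l2']] := between lyx l1 l2x.
  move/forallP: nb => /(_ w'); rewrite /ltr l1' l2' !andbT; apply/negP/negPn; apply/andP; split.
    by apply: contra n1 => /eqP ->; rewrite E1.
  by apply: contra n2 => /eqP e; rewrite -E1 e px.
- rewrite inE => /andP [/andP [nut lut] nb].
  pose k := lv x && ((u \notin I) || (u \in C)).
  have memk : if k then (u \notin I) || (u \in C) else u \in I.
    rewrite /k; case Ex: (lv x) => /=.
      by case: ifP => //; case: (boolP (u \in I)).
    by move: Ex; rewrite lx => /negbFE; apply: ID lut.
  have [y [E1 E2]] := copy memk.
  exists y => //; rewrite inE; apply/andP; split.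
    rewrite /ltr leE E1 px lut E2 /=.
    have -> : (k <= lv x)%N by rewrite /k; case: (lv x) => /=; rewrite ?leq_b1.
    by rewrite andbT; apply: contra nut => /eqP e; rewrite -E1 e px.
  apply/forallP => z; apply/negP => /andP [/andP [nyz lyz] /andP [nzx lzx]].
  move: (lyz) (lzx); rewrite !leE E1 px => /andP [luz lv1] /andP [lzt lv2].
  have : (pp z == u) || (pp z == t).
    apply/negPn/negP; rewrite negb_or => /andP [n1 n2].
    move/forallP: nb => /(_ (pp z)); rewrite /ltr luz lzt eq_sym n1 n2.
    by [].
  case/orP => /eqP e.
    have lz : lv z = true.
      case Ez: (lv z) => //; case/negP: nyz; apply/eqP/fE; rewrite ?E1 ?e //.
      by move: lv1; rewrite Ez; case: (lv y).
    have ly : lv y = false.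
      case Ey: (lv y) => //; case/negP: nyz; apply/eqP/fE; rewrite ?E1 ?e ?lz //.
    move: E2 (memD z); rewrite ly lz e /k => /esym.
    have lxx : lv x = true by move: lv2; rewrite lz; case: (lv x).
    by rewrite lxx /= => ->.
  have lxx : lv x = true.
    case Ex: (lv x) => //; case/negP: nzx; apply/eqP/fE; rewrite ?px ?e //.
    by move: lv2; rewrite Ex; case: (lv z).
  have lz : lv z = false.
    case Ez: (lv z) => //; case/negP: nzx; apply/eqP/fE; rewrite ?px ?e ?lxx //.
  have := lv0I lz; rewrite e => tI; by move: lxx; rewrite lx tI.
Qed.

Section Lower.
Variable a : T.
Hypotheses (aC : a \in C) (amin : forall c, c \in C -> le a c).

Lemma lcov_top x : lv x = true -> pp x \in C -> (#|lcov le' x| == 1%N) = (pp x == a).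
Proof.
move=> lx xC.
have [x0 [E0 F0]] := @copy (pp x) false (CI xC).
have nx0 : x0 != x by apply/negP => /eqP e; move: F0; rewrite e lx.
have x0c : x0 \in lcov le' x.
  rewrite inE /ltr nx0 leE E0 lrefl F0 /=; apply/forallP => z; apply/negP.
  move=> /andP [/andP [n1 l1] /andP [n2 l2]].
  move: l1 l2; rewrite !leE E0 F0 => /andP [h1 _] /andP [h2 h3].
  have ez : pp z = pp x by apply: lanti; rewrite h1 h2.
  case Ez: (lv z).
    by case/negP: n2; apply/eqP/fE; rewrite ?lx.
  by case/negP: n1; apply/eqP/fE; rewrite ?E0 ?F0.
case: (pp x =P a) => [ea|nea].
  apply/cards1P; exists x0; apply/setP => y; rewrite inE; apply/idP/eqP => [yc|->] //.
  move: (yc); rewrite inE => /andP [/andP [nyx lyx] nb].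
  move: (lyx); rewrite leE => /andP [lyxp _].
  case: (boolP (pp y == pp x)) => [/eqP e|ne].
    apply: fE; rewrite ?e ?E0 //; case Ey: (lv y) => //.
    by case/negP: nyx; apply/eqP/fE; rewrite ?lx.
  exfalso; move/forallP: nb => /(_ x0).
  have -> : ltr le' x0 x by move: x0c; rewrite inE => /andP [].
  rewrite andbT /ltr; apply/negP/negPn/andP; split.
    by apply: contra ne => /eqP ->; rewrite E0.
  rewrite leE E0 F0 lyxp /=.
  case Ey: (lv y) => //.
  have yC : pp y \in C by apply: lv1C Ey (ID lyxp (CI xC)).
  by case/negP: ne; apply/eqP/lanti; rewrite lyxp /= ea amin.
have lac : ltr le a (pp x) by rewrite /ltr amin // andbT; apply/negP => /eqP e; apply: nea; rewrite e.
have [u lau uc] := cover_exists lrefl lanti ltrans lac.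
move: (uc); rewrite inE => /andP [/andP [nux lux] nbu].
have uC : pp x \in C := xC.
have uC' : u \in C by apply: convP aC xC lau lux.
have [x2 [E2 F2]] := @copy u true (introT orP (or_intror uC')).
have x2c : x2 \in lcov le' x.
  rewrite inE /ltr leE E2 F2 lx lux /= andbT; apply/andP; split.
    by apply: contra nux => /eqP <-; rewrite E2.
  apply/forallP => z; apply/negP => /andP [/andP [n1 l1] /andP [n2 l2]].
  move: l1 l2; rewrite !leE E2 F2 lx => /andP [h1 lz] /andP [h2 _].
  have lzz : lv z = true by move: lz; case: (lv z).
  case: (boolP (pp z == u)) => [/eqP e|ne1].
    by case/negP: n1; apply/eqP/fE; rewrite ?E2 ?F2 ?e.
  case: (boolP (pp z == pp x)) => [/eqP e|ne2].
    by case/negP: n2; apply/eqP/fE; rewrite ?lx ?e.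
  move/forallP: nbu => /(_ (pp z)); rewrite /ltr h1 h2 eq_sym ne1 ne2.
  by [].
apply/negbTE; apply/negP => /cards1P [y e].
have : x0 == x2.
  by move: x0c x2c; rewrite e !inE => /eqP -> /eqP ->.
by move/eqP => e2; move: F0; rewrite e2 F2.
Qed.

Lemma cnt_dbl : cnt le' = (cnt le).+1.
Proof.
have [xa [Ea Fa]] := @copy a true (introT orP (or_intror aC)).
have nxa : xa \notin sigl @: [set t | #|lcov le t| == 1%N].
  apply/imsetP => [[t _ e]]; move: Fa; rewrite e lv_sig; move: Ea; rewrite e p_sig => ->.
  by rewrite (CI aC).
rewrite /cnt.
have -> : [set x | #|lcov le' x| == 1%N] = xa |: sigl @: [set t | #|lcov le t| == 1%N].
  apply/setP => x; rewrite !inE.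
  case: (boolP (lv x == (pp x \notin I))) => [/eqP e|ne].
    have xs : x = sigl (pp x) by apply: fE; rewrite ?p_sig ?lv_sig.
    have -> : (x == xa) = false.
      apply/negbTE/negP => /eqP ex; move: e; rewrite ex Fa Ea (CI aC).
      by [].
    rewrite /= {1}xs lcov_sig; apply/idP/imsetP => [h|[t]].
      by exists (pp x); rewrite ?inE.
    by rewrite inE => h ->; rewrite p_sig.
  have lx : lv x = true.
    by case Ex: (lv x) => //; move: ne; rewrite Ex (lv0I Ex).
  have xI : pp x \in I by move: ne; rewrite lx; case: (pp x \in I).
  have xC := lv1C lx xI.
  rewrite (lcov_top lx xC).
  have -> : (x \in sigl @: [set t | #|lcov le t| == 1%N]) = false.
    apply/negbTE/imsetP => [[t _ ex]]; case/negP: ne.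
    by rewrite ex p_sig lv_sig.
  rewrite orbF; apply/eqP/eqP => [ea|->]; last by rewrite Ea.
  by apply: fE; rewrite ?ea ?Ea ?lx ?Fa.
rewrite cardsU1 nxa card_imset; last exact: sig_inj.
by rewrite add1n.
Qed.

End Lower.

Lemma step_inv a : a \in C -> (forall c, c \in C -> le a c) ->
  (Qr le -> msize le = (cnt le).+1) -> Qr le' -> msize le' = (cnt le').+1.
Proof.
move=> aC amin IH Q; rewrite (msize_dbl Q) (cnt_dbl aC amin) IH //.
exact: Q_desc.
Qed.

End Dbl.

Lemma dg_po (b : bool) (T : finType) (le : rel T) : doubling_generated b le ->
  [/\ reflexive le, antisymmetric le & transitive le].
Proof.
elim => {T le} [T le c1 r | T le C T' le' f _ [r a t] _ _ finj _ _ fle].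
  have e : forall x y : T, x = y.
    by move=> x y; apply: (card_le1_eqP (A := T)); rewrite ?c1 ?inE.
  split.
  - exact: r.
  - by move=> x y _; apply: e.
  - by move=> y x z _ _; rewrite (e z x) r.
split; [exact: lrefl' r fle | exact: lanti' a finj fle | exact: ltrans' t fle].
Qed.

Lemma dg_inv (T : finType) (le : rel T) : doubling_generated true le ->
  Qr le -> msize le = (cnt le).+1.
Proof.
elim => {T le} [T le c1 r | T le C T' le' f dg IH Cne lpi finj fD fonto fle].
  have e : forall x y : T, x = y.
    by move=> x y; apply: (card_le1_eqP (A := T)); rewrite ?c1 ?inE.
  move=> _; have -> : cnt le = 0.
    apply/eqP; rewrite cards_eq0; apply/eqP/setP => x; rewrite !inE.
    have -> : lcov le x = set0 by apply/setP => y; rewrite !inE /ltr (e y x) eqxx.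
    by rewrite cards0.
  apply/eqP; rewrite eqn_leq; apply/andP; split.
    by apply/bigmax_leqP => S _; rewrite -c1 max_card.
  have : (0 < #|T|)%N by rewrite c1.
  case/card_gt0P => x _.
  have := @msize_ge T le [set x]; rewrite cards1; apply.
  by apply/chainrP => u v; rewrite !inE => /eqP -> /eqP ->; rewrite r.
have [r a t] := dg_po dg.
move: lpi => /= [a0 [B [Bne lB EC Cconv]]].
have aC : a0 \in C.
  case/set0Pn: Bne => b bB; rewrite EC; apply/bigcupP; exists b => //.
  by rewrite inE r lB.
have amin : forall c, c \in C -> le a0 c.
  by move=> c; rewrite EC => /bigcupP [b _]; rewrite inE => /andP [].
exact: (step_inv r a t Cne Cconv finj fD fonto fle aC amin IH).
Qed.

Section Dual.
Variables (T : finType) (le : rel T) (C : {set T}).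
Hypotheses (r : reflexive le) (t : transitive le) (Cconv : convex le C).
Local Notation lo := (fun x y => le y x).
Local Notation I := (down_closure le C).
Local Notation U := (down_closure lo C).

Definition hflip (q : T * bool) : T * bool :=
  (q.1, if q.1 \in C then ~~ q.2 else q.1 \notin U).

Lemma cv x y z : x \in C -> z \in C -> le x y -> le y z -> y \in C.
Proof.
move=> xC zC lxy lyz; move/forallP: Cconv => /(_ x); rewrite xC /= => /forallP /(_ z).
by rewrite zC /= => /forallP /(_ y); rewrite lxy lyz.
Qed.

Lemma inI y : (y \in I) = [exists c in C, le y c].
Proof. by rewrite inE. Qed.
Lemma inU y : (y \in U) = [exists c in C, le c y].
Proof. by rewrite inE. Qed.

Lemma CinI c : c \in C -> c \in I.
Proof. by move=> cC; rewrite inI; apply/existsP; exists c; rewrite cC r. Qed.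
Lemma CinU c : c \in C -> c \in U.
Proof. by move=> cC; rewrite inU; apply/existsP; exists c; rewrite cC r. Qed.

Lemma memDd q : (q \in doubling le C) = (if q.2 then (q.1 \notin I) || (q.1 \in C) else q.1 \in I).
Proof. by rewrite inE. Qed.

Lemma notC_lv y k : (y, k) \in doubling le C -> y \notin C -> k = (y \notin I).
Proof. by rewrite memDd; case: k => /=; case: (y \in C); case: (y \in I). Qed.

Lemma notC_lvU y k : (y, k) \in doubling lo C -> y \notin C -> k = (y \notin U).
Proof. by rewrite inE; case: k => /=; case: (y \in C); case: (y \in U). Qed.

Lemma hflip_mem q : q \in doubling le C -> hflip q \in doubling lo C.
Proof.
move=> _; rewrite inE /hflip /=; case: (boolP (q.1 \in C)) => qC.
  by case: (q.2) => /=; rewrite ?qC ?orbT ?CinU.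
by case: (boolP (q.1 \in U)).
Qed.

Lemma hflip_inj q1 q2 : q1 \in doubling le C -> q2 \in doubling le C -> hflip q1 = hflip q2 -> q1 = q2.
Proof.
case: q1 => y1 k1; case: q2 => y2 k2 D1 D2 [e]; rewrite -{}e in D2 *.
case: (boolP (y1 \in C)) => yC.
  by move/(congr1 negb); rewrite !negbK => ->.
by move=> _; rewrite (notC_lv D1 yC) (notC_lv D2 yC).
Qed.

Lemma hflip_onto q : q \in doubling lo C -> exists2 q', q' \in doubling le C & hflip q' = q.
Proof.
case: q => y k D; case: (boolP (y \in C)) => yC.
  exists (y, ~~ k); first by rewrite memDd /=; case: (k); rewrite ?yC ?orbT ?CinI.
  by rewrite /hflip /= yC negbK.
exists (y, y \notin I); first by rewrite memDd /=; case: (boolP (y \in I)).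
by rewrite /hflip /= (negbTE yC) (notC_lvU D yC).
Qed.

Lemma hflip_le q1 q2 : q1 \in doubling le C -> q2 \in doubling le C ->
  dbl_le le q2 q1 = dbl_le lo (hflip q1) (hflip q2).
Proof.
case: q1 => y1 k1; case: q2 => y2 k2 D1 D2; rewrite /dbl_le /hflip /=.
case: (boolP (le y2 y1)) => //= l21.
case: (boolP (y1 \in C)) => c1; case: (boolP (y2 \in C)) => c2.
- by case: (k1); case: (k2).
- have k2f : k2 = false.
    by rewrite (notC_lv D2 c2); apply/negbTE; rewrite negbK inI; apply/existsP; exists y1; rewrite c1.
  have nU : y2 \notin U.
    apply/negP; rewrite inU => /existsP [c /andP [cC lc]].
    by rewrite (cv cC c1 lc l21) in c2.
  by rewrite k2f nU; case: (k1).
- have k1t : k1 = true.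
    rewrite (notC_lv D1 c1) /=; apply/negP; rewrite inI => /existsP [c /andP [cC lc]].
    by rewrite (cv c2 cC l21 lc) in c1.
  have yU : y1 \in U by rewrite inU; apply/existsP; exists y2; rewrite c2.
  by rewrite k1t yU /= leq_b1.
- rewrite (notC_lv D1 c1) (notC_lv D2 c2) /=.
  have h1 : (y2 \notin I) ==> (y1 \notin I).
    apply/implyP => n2; apply: contra n2; rewrite !inI => /existsP [c /andP [cC lc]].
    by apply/existsP; exists c; rewrite cC (t l21 lc).
  have h2 : (y1 \notin U) ==> (y2 \notin U).
    apply/implyP => n1; apply: contra n1; rewrite !inU => /existsP [c /andP [cC lc]].
    by apply/existsP; exists c; rewrite cC (t lc l21).
  move: h1 h2; case: (y1 \in I); case: (y2 \in I); case: (y1 \in U); case: (y2 \in U) => //.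
Qed.

Lemma lpi_of_upi : upper_pseudo_interval le C -> lower_pseudo_interval lo C.
Proof.
move=> [b [A [Ane lA EC _]]]; exists b, A; split => //.
- rewrite EC; apply: eq_bigr => a0 _; apply/setP => y; rewrite !inE andbC //.
- apply/forallP => x; apply/implyP => xC; apply/forallP => z; apply/implyP => zC.
  apply/forallP => y; apply/implyP => /andP [h1 h2]; exact: cv zC xC h2 h1.
Qed.

End Dual.

Lemma dg_dual (T : finType) (le : rel T) : doubling_generated false le ->
  doubling_generated true (fun x y => le y x).
Proof.
elim => {T le} [T le c1 r | T le C T' le' f dg IH Cne upi finj fD fonto fle].
  by apply: dg_one.
have [r a t] := dg_po dg.
have Cconv : convex le C by case: upi => [b [A [_ _ _ ?]]].
apply: (@dg_double true T (fun x y => le y x) C T' (fun x y => le' y x) (fun x => hflip le C (f x))) => //.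
- exact: lpi_of_upi Cconv upi.
- by move=> x y /(hflip_inj (fD x) (fD y)) /finj.
- by move=> x; apply: (hflip_mem r (fD x)).
- move=> q /(hflip_onto r) [q' q'D <-].
  by have [x fx] := fonto _ q'D; exists x; rewrite fx.
- by move=> x y; rewrite fle; apply: (hflip_le t Cconv).
Qed.
Import Order.Theory.
Local Open Scope order_scope.

Section Lat.
Variables (d : Order.disp_t) (L : finTBLatticeType d).
Local Notation leL := (fun x y : L => (x <= y)%O).

Lemma leL_refl : reflexive leL. Proof. by move=> x; exact: lexx. Qed.
Lemma leL_anti : antisymmetric leL. Proof. by move=> x y; exact: le_anti. Qed.
Lemma leL_trans : transitive leL. Proof. by move=> y x z; exact: le_trans. Qed.

Lemma JI_cov (x : L) : join_irreducible x = (#|lcov leL x| == 1%N).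
Proof.
apply/idP/idP.
- case/andP => nb /forallP JI.
  have lbx : ltr leL \bot x by rewrite /ltr eq_sym nb le0x.
  have [y _ yc] := cover_exists leL_refl leL_anti leL_trans lbx.
  apply/cards1P; exists y; apply/setP => z; rewrite inE; apply/idP/eqP => [zc|->] //.
  apply/eqP/negPn/negP => nzy.
  move: (yc) (zc); rewrite !inE => /andP [/andP [nyx lyx] nby] /andP [/andP [nzx lzx] nbz].
  have jx : (y `|` z <= x)%O by rewrite leUx lyx lzx.
  case: (boolP (y `|` z == x)) => [/eqP e|ne].
    move: (JI y) => /forallP /(_ z); rewrite -e eqxx /= e.
    by rewrite eq_sym (negbTE nyx) eq_sym (negbTE nzx).
  have eyz : y `|` z = y.
    apply/eqP/negPn/negP => n; move/forallP: nby => /(_ (y `|` z)).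
    by rewrite /ltr ne jx leUl eq_sym n.
  have lzy : (z <= y)%O by rewrite -eyz leUr.
  move/forallP: nbz => /(_ y); rewrite /ltr lzy nyx lyx.
  by rewrite nzy.
- move/cards1P => [y ey].
  have yc : y \in lcov leL x by rewrite ey inE.
  move: (yc); rewrite inE => /andP [/andP [nyx lyx] _].
  apply/andP; split.
    by apply/negP => /eqP xb; move: lyx nyx; rewrite xb lex0 => /eqP ->; rewrite eqxx.
  apply/forallP => u; apply/forallP => v; apply/implyP => /eqP e.
  apply/negPn/negP; rewrite negb_or => /andP [nu nv].
  have below w : w != x -> (w <= x)%O -> (w <= y)%O.
    move=> nw lw; have lwx : ltr leL w x by rewrite /ltr nw lw.
    have [w' lww' wc] := cover_exists leL_refl leL_anti leL_trans lwx.
    by move: wc; rewrite ey inE => /eqP <-.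
  have lu : (u <= y)%O by apply: below; rewrite 1?eq_sym // e leUl.
  have lv : (v <= y)%O by apply: below; rewrite 1?eq_sym // e leUr.
  have : (x <= y)%O by rewrite e leUx lu lv.
  move=> lxy; case/negP: nyx; apply/eqP; apply: le_anti; rewrite lxy lyx.
  by [].
Qed.

Lemma Q_of_shell : shellable L -> Qr leL.
Proof.
move=> [s [_ sm sP]]; exists s; split => // j jr.
have [j0 js] := andP jr.
have := sP j jr => pure.
set K := shelling_complex s j in pure.
have ne : set0 \in K.
  rewrite inE sub0set /=; apply/hasP; exists (nth set0 (take j s) 0); rewrite ?sub0set //.
  by apply: mem_nth; rewrite size_take js.
have [G GK Gmax] := @arg_maxnP _ set0 (fun G => G \in K) (fun G : {set L} => #|G|) ne.
have sG : #|G| = (#|nth set0 s j| - 1)%N.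
  apply: pure => // H HK sub; apply/eqP; rewrite eq_sym eqEcard sub /=; exact: Gmax.
move: GK; rewrite inE => /andP [Gj /hasP [F Ft GF]].
exists (index F s); first exact: index_ltn Ft.
rewrite nth_index; last exact: mem_take Ft.
apply: leq_trans (_ : #|G| + 1 <= _)%N.
  by rewrite sG; case: (#|nth set0 s j|) => // n; rewrite subSS subn0 addn1.
by rewrite leq_add2r; apply: subset_leq_card; rewrite subsetI GF Gj.
Qed.

End Lat.
Import Order.Theory.

Lemma Q_op (T : finType) (le : rel T) : Qr le -> Qr (fun x y => le y x).
Proof. by move=> [s [sm sQ]]; exists s; split => // F; rewrite maxchainr_op. Qed.

Lemma msize_op (T : finType) (le : rel T) : msize (fun x y => le y x) = msize le.
Proof. by apply: eq_bigl => S; rewrite chainr_op. Qed.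

Theorem corollary3p25 (d : Order.disp_t) (L : finTBLatticeType d) :
  (join_congruence_uniform L -> shellable L -> join_extremal L) /\
  (meet_congruence_uniform L -> shellable L -> meet_extremal L).
Proof.
split => [jcu sh | mcu sh].
- have := dg_inv jcu (Q_of_shell sh); rewrite /join_extremal.
  change (lattice_length L) with (msize (fun x y : L => (x <= y)%O) - 1)%N.
  move=> ->; rewrite subn1 /=; apply: eq_card => x; rewrite !inE JI_cov.
  by [].
- have := dg_inv (dg_dual mcu) (Q_op (Q_of_shell sh)); rewrite msize_op /meet_extremal.
  change (lattice_length L) with (msize (fun x y : L => (x <= y)%O) - 1)%N.
  move=> ->; rewrite subn1 /=; apply: eq_card => x; rewrite !inE.
  change (meet_irreducible x) with (join_irreducible (x : L^d)).
  by rewrite JI_cov.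
Qed.
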